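(* Let $f$ be analytic on $\mathbb{D}$ with $f(z)=z+\sum_{n=2}^{\infty}a_nz^n$ and $\operatorname{Re}f'(z)>0$ for all $z\in\mathbb{D}$, and let $\Gamma_1=-\frac12a_2$, $\Gamma_2=-\frac12\left(a_3-\frac32a_2^2\right)$. Then $$-\frac13\le|\Gamma_2|-|\Gamma_1|\le\frac13.$$ Both inequalities are sharp.
   Context: $\mathbb{D}=\{z\in\mathbb{C}:|z|<1\}$. The class of such $f$ is the class $\mathcal{R}$ of functions of bounded turning. $\Gamma_1,\Gamma_2$ are the first two logarithmic inverse coefficients: with $F=f^{-1}$ near $0$, $\log\frac{F(w)}{w}=2\sum_{n\ge1}\Gamma_nw^n$ near $0$. *)

(* Defs.v *)
From Stdlib Require Import Reals.
From Coquelicot Require Import Coquelicot.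
Open Scope R_scope.

Definition in_disk (z : C) : Prop := Cmod z < 1.

Definition bounded_turning (f : C -> C) (a : nat -> C) : Prop :=
  a 0%nat = 0%C /\ a 1%nat = 1%C /\
  (forall z : C, in_disk z -> is_pseries a z (f z)) /\
  (forall z : C, in_disk z -> exists l : C, is_derive f z l /\ 0 < Re l).

Definition Gamma1 (a : nat -> C) : C := (- (1/2) * a 2%nat)%C.
Definition Gamma2 (a : nat -> C) : C :=
  (- (1/2) * (a 3%nat - (3/2) * (a 2%nat * a 2%nat)))%C.

(* Main.v *)
Require Import Defs.
From Stdlib Require Import Reals Lra Lia Psatz Arith ClassicalEpsilon.
From Coquelicot Require Import Coquelicot.
Open Scope R_scope.

Lemma lim_C_of_bound (s : nat -> C) (l : C) (e : nat -> R) :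
  is_lim_seq e 0 -> (forall n, Cmod (s n - l)%C <= e n) ->
  filterlim s eventually (locally l).
Proof.
  intros He Hb P [eps HP].
  apply is_lim_seq_spec in He.
  destruct (He eps) as [N HN].
  exists N. intros n Hn. apply HP.
  apply C_NormedModule_mixin_compat1.
  specialize (HN n Hn). specialize (Hb n).
  rewrite Rminus_0_r in HN. apply Rle_lt_trans with (e n); auto.
  apply Rle_lt_trans with (Rabs (e n)); auto. apply Rle_abs.
Qed.

Lemma lim_C_spec (s : nat -> C) (l : C) :
  filterlim s eventually (locally l) ->
  forall eps, 0 < eps -> exists N, forall n, (N <= n)%nat -> Cmod (s n - l)%C < eps.
Proof.
  intros H eps Heps.
  assert (Hs2 : sqrt 2 < 2).
  { rewrite <- (sqrt_square 2) at 2 by lra. apply sqrt_lt_1; lra. }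
  assert (He2 : 0 < eps / 2) by lra.
  destruct (H (fun y => Cmod (y - l)%C < eps)) as [N HN].
  { exists (mkposreal _ He2). intros y Hy.
    apply C_NormedModule_mixin_compat2 in Hy. simpl in Hy.
    change (minus y l) with (y - l)%C in Hy.
    assert (0 <= sqrt 2) by apply sqrt_pos. nra. }
  exists N. exact HN.
Qed.

Lemma lim_C_unique (s : nat -> C) (l1 l2 : C) :
  filterlim s eventually (locally l1) -> filterlim s eventually (locally l2) -> l1 = l2.
Proof.
  intros H1 H2.
  destruct (Req_dec (Cmod (l1 - l2)%C) 0) as [E|E].
  - apply Cmod_eq_0 in E. 
    replace l1 with ((l1 - l2) + l2)%C by ring. rewrite E. ring.
  - assert (P : 0 < Cmod (l1 - l2)%C / 2).
    { pose proof (Cmod_ge_0 (l1 - l2)%C). lra. }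
    destruct (lim_C_spec _ _ H1 _ P) as [N1 HN1].
    destruct (lim_C_spec _ _ H2 _ P) as [N2 HN2].
    specialize (HN1 (N1 + N2)%nat ltac:(lia)).
    specialize (HN2 (N1 + N2)%nat ltac:(lia)).
    pose proof (Cmod_triangle (l1 - s (N1+N2)%nat) (s (N1 + N2)%nat - l2))%C.
    replace (l1 - s (N1 + N2)%nat + (s (N1 + N2)%nat - l2))%C with (l1 - l2)%C in H by ring.
    rewrite <- Cmod_opp in HN1.
    replace (- (s (N1 + N2)%nat - l1))%C with (l1 - s (N1 + N2)%nat)%C in HN1 by ring.
    lra.
Qed.
Fixpoint rsum (f : nat -> R) (n : nat) : R :=
  match n with O => 0 | S n => rsum f n + f n end.
Fixpoint csum (f : nat -> C) (n : nat) : C :=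
  match n with O => RtoC 0 | S n => (csum f n + f n)%C end.

Lemma sum_n_csum (f : nat -> C) n : sum_n f n = csum f (S n).
Proof.
  induction n.
  - rewrite sum_O. simpl. change (f 0%nat = (0 + f 0%nat)%C). ring.
  - rewrite sum_Sn, IHn. reflexivity.
Qed.

Lemma sum_n_rsum (f : nat -> R) n : sum_n f n = rsum f (S n).
Proof.
  induction n.
  - rewrite sum_O. simpl. ring.
  - rewrite sum_Sn, IHn. reflexivity.
Qed.

Lemma Cmod_csum (u : nat -> C) n : Cmod (csum u n) <= rsum (fun k => Cmod (u k)) n.
Proof.
  induction n; simpl.
  - rewrite Cmod_0. lra.
  - eapply Rle_trans. apply Cmod_triangle. lra.
Qed.

Lemma rsum_nonneg (f : nat -> R) n : (forall k, 0 <= f k) -> 0 <= rsum f n.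
Proof. intros H; induction n; simpl; [lra|]. specialize (H n). lra. Qed.

Lemma rsum_le (f g : nat -> R) n : (forall k, f k <= g k) -> rsum f n <= rsum g n.
Proof. intros H; induction n; simpl; [lra|]. specialize (H n). lra. Qed.

Lemma rsum_term (f : nat -> R) n k : (forall k, 0 <= f k) -> (k < n)%nat -> f k <= rsum f n.
Proof.
  intros H; induction n; intros Hk; [lia|]. simpl.
  destruct (Nat.eq_dec k n) as [->|Hne].
  - pose proof (rsum_nonneg f n H). lra.
  - pose proof (H n). assert (k < n)%nat by lia. specialize (IHn H1). lra.
Qed.

Lemma series_Cmod_le (u : nat -> C) (l : C) (B : R) :
  is_series u l -> (forall n, Cmod (csum u n) <= B) -> Cmod l <= B.
Proof.
  intros Hs Hb.
  destruct (Rle_lt_dec (Cmod l) B) as [|Hlt]; auto.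
  exfalso.
  destruct (lim_C_spec _ _ Hs (Cmod l - B)) as [N HN]; [lra|].
  specialize (HN N (le_n _)). rewrite sum_n_csum in HN.
  specialize (Hb (S N)).
  pose proof (Cmod_triangle (l - csum u (S N)) (csum u (S N)))%C.
  replace (l - csum u (S N) + csum u (S N))%C with l in H by ring.
  rewrite <- Cmod_opp in HN.
  replace (- (csum u (S N) - l))%C with (l - csum u (S N))%C in HN by ring.
  lra.
Qed.

Lemma series_terms_bounded (u : nat -> C) (l : C) :
  is_series u l -> exists M, forall n, Cmod (u n) <= M.
Proof.
  intros Hs.
  destruct (lim_C_spec _ _ Hs 1) as [N HN]; [lra|].
  exists (2 + rsum (fun k => Cmod (u k)) (S N)).
  intros n.
  assert (Hnn : 0 <= rsum (fun k => Cmod (u k)) (S N)).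
  { apply rsum_nonneg. intros; apply Cmod_ge_0. }
  destruct (le_lt_dec n N) as [Hle|Hlt].
  - pose proof (rsum_term (fun k => Cmod (u k)) (S N) n (fun k => Cmod_ge_0 _) ltac:(lia)).
    lra.
  - destruct n as [|n]; [lia|].
    pose proof (HN n ltac:(lia)) as H1. pose proof (HN (S n) ltac:(lia)) as H2.
    rewrite sum_n_csum in H1, H2. simpl csum in H2.
    replace (u (S n)) with ((csum u (S n) + u (S n) - l) - (csum u (S n) - l))%C by ring.
    eapply Rle_trans. unfold Cminus at 1. apply Cmod_triangle. rewrite Cmod_opp.
    change (csum u n + u n)%C with (csum u (S n)) in H2. lra.
Qed.

Lemma real_series_tail (b : nat -> R) (Sb : R) :
  is_series b Sb -> forall eps, 0 < eps -> exists m, forall n, (m <= n)%nat -> Rabs (Sb - rsum b n) < eps.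
Proof.
  intros Hs eps He.
  assert (Hl : is_lim_seq (sum_n b) Sb) by exact Hs.
  apply is_lim_seq_spec in Hl.
  destruct (Hl (mkposreal _ He)) as [N HN].
  exists (S N). intros n Hn. destruct n as [|n]; [lia|].
  specialize (HN n ltac:(lia)). rewrite sum_n_rsum in HN. simpl in HN.
  rewrite Rabs_minus_sym. exact HN.
Qed.

Lemma lim_inv_Sn : is_lim_seq (fun n => / INR (S n)) 0.
Proof.
  assert (H := is_lim_seq_inv _ _ is_lim_seq_INR ltac:(discriminate)).
  simpl in H. apply is_lim_seq_incr_1 in H. exact H.
Qed.

Lemma ex_series_poly_pos (q : R) : 0 < q < 1 ->
  ex_series (fun k => INR (S k) ^ 2 * q ^ k).
Proof.
  intros Hq.
  apply ex_series_ext with (fun k => Rabs (INR (S k) ^ 2 * q ^ k)).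
  { intros n. rewrite Rabs_pos_eq; auto. apply Rmult_le_pos.
    apply pow_le, pos_INR. apply pow_le; lra. }
  apply ex_series_DAlembert with q; [lra| |].
  - intros n. apply Rmult_integral_contrapositive; split.
    apply pow_nonzero. apply not_0_INR; lia. apply pow_nonzero; lra.
  - apply is_lim_seq_ext with (fun n => (1 + / INR (S n)) * (1 + / INR (S n)) * q).
    + intros n. assert (0 < INR (S n)) by (apply lt_0_INR; lia).
      rewrite Rabs_pos_eq.
      * rewrite (S_INR (S n)). set (x := INR (S n)) in *. replace (q ^ S n) with (q * q ^ n) by (simpl; ring). field. split; [|lra].
        apply pow_nonzero; lra.
      * apply Rmult_le_pos. apply Rmult_le_pos. apply pow_le, pos_INR. apply pow_le; lra.
        apply Rlt_le, Rinv_0_lt_compat. apply Rmult_lt_0_compat. apply pow_lt; lra. apply pow_lt; lra.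
    + assert (Hl : is_lim_seq (fun n => (1 + / INR (S n)) * (1 + / INR (S n)) * q) ((1+0)*(1+0)*q)).
      { apply is_lim_seq_mult'; [|apply is_lim_seq_const].
        apply is_lim_seq_mult'; apply is_lim_seq_plus'; try apply is_lim_seq_const; apply lim_inv_Sn. }
      replace ((1+0)*(1+0)*q) with q in Hl by ring. exact Hl.
Qed.

Lemma ex_series_poly (q : R) : 0 <= q < 1 ->
  ex_series (fun k => INR (S k) ^ 2 * q ^ k).
Proof.
  intros Hq.
  apply (ex_series_le (K := R_AbsRing) (V := R_CompleteNormedModule)) with (fun k => INR (S k) ^ 2 * ((1+q)/2) ^ k).
  - intros n. change norm with Rabs. rewrite Rabs_pos_eq.
    + apply Rmult_le_compat_l. apply pow_le, pos_INR. apply pow_incr; lra.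
    + apply Rmult_le_pos. apply pow_le, pos_INR. apply pow_le; lra.
  - apply ex_series_poly_pos. lra.
Qed.

Lemma Cpow_pow_n (x : C) n : pow_n x n = (x ^ n)%C.
Proof. induction n; simpl; auto. Qed.

Lemma is_pseries_C (a : nat -> C) (w l : C) :
  is_pseries a w l <-> is_series (fun k => (a k * w ^ k)%C) l.
Proof.
  assert (E : forall k, scal (pow_n w k) (a k) = (a k * w ^ k)%C).
  { intros k. change (scal (pow_n w k) (a k)) with (Cmult (pow_n w k) (a k)).
    rewrite Cpow_pow_n. apply Cmult_comm. }
  unfold is_pseries. split; apply is_series_ext; intros k; rewrite E; reflexivity.
Qed.

Lemma Cmod_pow_le (z : C) (rho : R) n : Cmod z <= rho -> Cmod (z ^ n)%C <= rho ^ n.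
Proof.
  intros H. rewrite Cmod_pow. apply pow_incr. split; auto. apply Cmod_ge_0.
Qed.

Definition ek (w z : C) (k : nat) : C :=
  (w ^ k - z ^ k - RtoC (INR k) * z ^ (pred k) * (w - z))%C.

Lemma ek_rec w z k : ek w z (S k) = (w * ek w z k + RtoC (INR k) * z ^ (pred k) * (w - z) * (w - z))%C.
Proof.
  unfold ek. destruct k as [|m].
  - simpl. ring.
  - rewrite !S_INR. rewrite !RtoC_plus. simpl pred. simpl Cpow. ring.
Qed.

Lemma Cmod_INR_pow (z : C) rho k : 0 < rho -> Cmod z <= rho ->
  Cmod (RtoC (INR k) * z ^ (pred k))%C <= INR k * rho ^ k / rho.
Proof.
  intros Hr Hz. rewrite Cmod_mult, Cmod_R, Rabs_pos_eq by apply pos_INR.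
  destruct k as [|m].
  - simpl. lra.
  - simpl pred. replace (INR (S m) * rho ^ S m / rho) with (INR (S m) * rho ^ m) by (simpl; field; lra).
    apply Rmult_le_compat_l. apply pos_INR. apply Cmod_pow_le; auto.
Qed.

Lemma ek_bound (w z : C) rho k : 0 < rho -> Cmod w <= rho -> Cmod z <= rho ->
  Cmod (ek w z k) <= INR k ^ 2 * rho ^ k * (Cmod (w - z) ^ 2 / rho ^ 2).
Proof.
  intros Hr Hw Hz. induction k.
  - unfold ek. simpl. replace (1 - 1 - 0 * 1 * (w - z))%C with (RtoC 0) by ring.
    rewrite Cmod_0. lra.
  - rewrite ek_rec. eapply Rle_trans. apply Cmod_triangle.
    rewrite Cmod_mult. rewrite !Cmod_mult.
    pose proof (Cmod_INR_pow z rho k Hr Hz).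
    set (h := Cmod (w - z)%C) in *.
    assert (0 <= h) by apply Cmod_ge_0.
    assert (0 <= Cmod (ek w z k)) by apply Cmod_ge_0.
    assert (0 <= Cmod w) by apply Cmod_ge_0.
    assert (0 <= INR k) by apply pos_INR.
    assert (0 < rho ^ k) by (apply pow_lt; lra).
    set (A := Cmod (RtoC (INR k) * z ^ pred k)%C) in *.
    assert (0 <= A) by apply Cmod_ge_0.
    assert (E1 : Cmod w * Cmod (ek w z k) <= rho * (INR k ^ 2 * rho ^ k * (h ^ 2 / rho ^ 2))).
    { apply Rmult_le_compat; auto. }
    assert (E2 : A * h * h <= INR k * rho ^ k / rho * h * h).
    { apply Rmult_le_compat_r; auto. apply Rmult_le_compat_r; auto. }
    rewrite S_INR. simpl pow.
    simpl pow in E1.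
    assert (E3 : INR k * rho ^ k / rho * h * h = INR k * (rho * rho ^ k) * (h * (h * 1) / (rho * (rho * 1)))) by (field; lra).
    assert (0 <= rho ^ k * (h * (h * 1) / (rho * (rho * 1)))).
    { apply Rmult_le_pos; [lra|]. apply Rmult_le_pos. nra. apply Rlt_le, Rinv_0_lt_compat. nra. }
    assert (0 <= INR k * (rho * rho ^ k) * (h * (h * 1) / (rho * (rho * 1)))).
    { replace (INR k * (rho * rho ^ k) * (h * (h * 1) / (rho * (rho * 1)))) with (INR k * rho * (rho ^ k * (h * (h * 1) / (rho * (rho * 1))))) by ring.
      apply Rmult_le_pos; auto. nra. }
    replace (Cmod (RtoC (INR k)) * Cmod (z ^ pred k)%C) with A by (unfold A; rewrite Cmod_mult; ring).
    set (P := rho * rho ^ k * (h * (h * 1) / (rho * (rho * 1)))).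
    assert (HP : 0 <= P) by (unfold P; nra).
    replace (rho * (INR k * (INR k * 1) * rho ^ k * (h * (h * 1) / (rho * (rho * 1))))) with (INR k * INR k * P) in E1 by (unfold P; ring).
    replace (INR k * (rho * rho ^ k) * (h * (h * 1) / (rho * (rho * 1)))) with (INR k * P) in E3 by (unfold P; ring).
    replace ((INR k + 1) * ((INR k + 1) * 1) * (rho * rho ^ k) * (h * (h * 1) / (rho * (rho * 1)))) with ((INR k + 1) * (INR k + 1) * P) by (unfold P; ring).
    nra.
Qed.

Lemma sqrt2_lt_2 : sqrt 2 < 2.
Proof. rewrite <- (sqrt_square 2) at 2 by lra. apply sqrt_lt_1; lra. Qed.

Lemma rsum_le_series (b : nat -> R) (Sb : R) n :
  (forall k, 0 <= b k) -> is_series b Sb -> rsum b n <= Sb.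
Proof.
  intros Hb Hs.
  assert (Hl : is_lim_seq (sum_n b) Sb) by exact Hs.
  apply (is_lim_seq_incr_n _ n) in Hl.
  assert (H := is_lim_seq_le (fun _ => rsum b n) (fun m => sum_n b (m + n)) (rsum b n) Sb).
  simpl in H. apply H; auto; [|apply is_lim_seq_const].
  intros m. rewrite sum_n_rsum.
  clear H Hl.
  assert (Hk : forall k, rsum b n <= rsum b (k + n)).
  { induction k; simpl; [lra|]. specialize (Hb (k + n)%nat). lra. }
  exact (Hk (S m)).
Qed.

Lemma Cmod_le_add (y z : C) : Cmod y <= Cmod (y - z)%C + Cmod z.
Proof. pose proof (Cmod_triangle (y - z) z)%C. replace (y - z + z)%C with y in H by ring. exact H. Qed.

Lemma ek_alg (ak y z : C) k :
  ((ak * y ^ k - ak * z ^ k) - (y - z) * (ak * (RtoC (INR k) * z ^ pred k)))%C = (ak * ek y z k)%C.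
Proof. unfold ek. ring. Qed.

Lemma pseries_derive (a : nat -> C) (f : C -> C) (R0 : R) (z : C) :
  (forall w, Cmod w < R0 -> is_series (fun k => (a k * w ^ k)%C) (f w)) -> Cmod z < R0 ->
  exists d, is_series (fun k => (RtoC (INR (S k)) * a (S k) * z ^ k)%C) d /\ is_derive f z d.
Proof.
  intros Hf Hz.
  pose proof (Cmod_ge_0 z) as Hz0.
  set (rho := (Cmod z + R0) / 2).
  set (R1 := (rho + R0) / 2).
  assert (Hrho : 0 < rho) by (unfold rho; lra).
  assert (HR1 : rho < R1 < R0) by (unfold R1, rho; lra).
  assert (HzR : Cmod z < rho) by (unfold rho; lra).
  destruct (series_terms_bounded _ _ (Hf (RtoC R1) ltac:(rewrite Cmod_R, Rabs_pos_eq; lra))) as [M HM].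
  set (q := rho / R1).
  assert (Hq : 0 < q < 1).
  { unfold q. split. apply Rdiv_lt_0_compat; lra. apply Rlt_div_l; lra. }
  assert (HM0 : 0 <= M) by (eapply Rle_trans; [apply Cmod_ge_0|apply (HM 0%nat)]).
  assert (Hb : forall k, Cmod (a k) * rho ^ k <= M * q ^ k).
  { intros k. specialize (HM k). rewrite Cmod_mult, Cmod_pow, Cmod_R, Rabs_pos_eq in HM by lra.
    replace rho with (q * R1) by (unfold q; field; lra).
    rewrite Rpow_mult_distr.
    assert (0 < q ^ k) by (apply pow_lt; lra).
    assert (0 < R1 ^ k) by (apply pow_lt; lra). nra. }
  assert (HSQ := ex_series_poly q ltac:(lra)).
  set (SQ := Series (fun k => INR (S k) ^ 2 * q ^ k)).
  assert (HSQs : is_series (fun k => INR (S k) ^ 2 * q ^ k) SQ) by (apply Series_correct; auto).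
  assert (Hpos : forall k, 0 <= INR (S k) ^ 2 * q ^ k).
  { intros k. apply Rmult_le_pos. apply pow2_ge_0. apply pow_le; lra. }
  assert (HSQ0 : 0 <= SQ).
  { apply Rle_trans with (rsum (fun k => INR (S k) ^ 2 * q ^ k) 0). simpl; lra.
    apply rsum_le_series; auto. }
  assert (Hex : ex_series (fun k => (RtoC (INR (S k)) * a (S k) * z ^ k)%C)).
  { apply (ex_series_le (K := C_AbsRing) (V := C_CompleteNormedModule)) with
      (fun k => M / rho * (INR (S k) ^ 2 * q ^ k)).
    - intros k. change norm with Cmod.
      rewrite !Cmod_mult, Cmod_R, Rabs_pos_eq by apply pos_INR.
      assert (Hk1 : 1 <= INR (S k)) by (apply (le_INR 1); lia).
      pose proof (Hb (S k)) as HbS. simpl pow in HbS.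
      assert (Hzk := Cmod_pow_le z rho k ltac:(lra)).
      assert (0 < rho ^ k) by (apply pow_lt; lra).
      assert (0 < q ^ k) by (apply pow_lt; lra).
      assert (0 <= Cmod (a (S k))) by apply Cmod_ge_0.
      assert (0 <= Cmod (z ^ k)%C) by apply Cmod_ge_0.
      assert (Ha : Cmod (a (S k)) * rho ^ k <= M / rho * q ^ k).
      { apply Rmult_le_reg_l with rho; auto.
        replace (rho * (M / rho * q ^ k)) with (M * q ^ k) by (field; lra).
        apply Rle_trans with (M * (q * q ^ k)); [nra|]. 
        apply Rmult_le_compat_l; auto. nra. }
      assert (Ha2 : Cmod (a (S k)) * Cmod (z ^ k)%C <= M / rho * q ^ k) by nra.
      assert (0 <= M / rho * q ^ k) by (apply Rmult_le_pos; [apply Rdiv_le_0_compat|]; lra).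
      replace (M / rho * (INR (S k) ^ 2 * q ^ k)) with (INR (S k) * INR (S k) * (M / rho * q ^ k)) by ring.
      set (X := M / rho * q ^ k) in *.
      rewrite Rmult_assoc.
      apply Rle_trans with (INR (S k) * X). apply Rmult_le_compat_l; lra.
      rewrite (Rmult_assoc (INR (S k))). apply Rmult_le_compat_l; [lra|].
      rewrite <- (Rmult_1_l X) at 1. apply Rmult_le_compat_r; lra.
    - exists (M / rho * SQ).
      apply is_series_ext with (fun k => scal (M / rho) (INR (S k) ^ 2 * q ^ k)).
      intros; reflexivity. exact (is_series_scal_l (K := R_AbsRing) (V := R_NormedModule) (M / rho) _ SQ HSQs). }
  assert (Hex2 : exists d : C, is_series (fun k => (RtoC (INR (S k)) * a (S k) * z ^ k)%C) d)
    by (destruct Hex as [d Hd]; exists d; exact Hd).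
  destruct Hex2 as [d Hd].
  exists d. split; auto.
  assert (Hd' : is_series (fun k => (a k * (RtoC (INR k) * z ^ (pred k)))%C) d).
  { apply is_series_decr_1.
    match goal with |- is_series _ ?l => replace l with d end.
    - eapply is_series_ext; [|exact Hd]. intros k.
      assert (E : (RtoC (INR (S k)) * a (S k) * z ^ k)%C = (a (S k) * (RtoC (INR (S k)) * z ^ pred (S k)))%C)
        by (simpl pred; ring).
      exact E.
    - change (@eq C d (d + - (a 0%nat * (RtoC 0 * z ^ 0)))%C). ring. }
  unfold is_derive, filterdiff. split.
  { apply is_linear_scal_l. }
  intros x Hx. apply (is_filter_lim_locally_unique (K := C_AbsRing) (V := AbsRing_NormedModule C_AbsRing)) in Hx. subst x.
  intros eps.
  set (del := Rmin (rho - Cmod z) (eps * rho ^ 2 / (M * SQ + 1))).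
  assert (Hdel : 0 < del).
  { unfold del. apply Rmin_pos. lra. apply Rdiv_lt_0_compat.
    apply Rmult_lt_0_compat. apply cond_pos. nra. nra. }
  assert (Hdel2 : 0 < del / 2) by lra.
  exists (mkposreal _ Hdel2). intros y Hy.
  change (Cmod (y - z)%C < del / 2) in Hy.
  assert (Hyz : Cmod (y - z)%C < del) by lra.
  change (norm (minus (minus (f y) (f z)) (scal (minus y z) d))) with (Cmod (f y - f z - (y - z) * d)%C).
  change (norm (minus y z)) with (Cmod (y - z)%C).
  set (h := Cmod (y - z)%C) in *.
  assert (Hh0 : 0 <= h) by apply Cmod_ge_0.
  assert (Hyr : Cmod y <= rho).
  { pose proof (Cmod_le_add y z) as H. fold h in H.
    assert (del <= rho - Cmod z) by apply Rmin_l. lra. }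
  assert (Hser : is_series (fun k => (a k * ek y z k)%C) (f y - f z - (y - z) * d)%C).
  { assert (H1 := Hf y ltac:(lra)). assert (H2 := Hf z Hz).
    assert (H3 := is_series_scal (y - z)%C _ _ Hd').
    assert (H4 := is_series_minus _ _ _ _ (is_series_minus _ _ _ _ H1 H2) H3).
    eapply is_series_ext; [|exact H4]. intros k.
    change (plus (plus (a k * y ^ k) (opp (a k * z ^ k))) (opp (scal (y - z) (a k * (RtoC (INR k) * z ^ pred k)))))%C
      with ((a k * y ^ k - a k * z ^ k) - (y - z) * (a k * (RtoC (INR k) * z ^ pred k)))%C.
    rewrite <- ek_alg. reflexivity. }
  apply Rle_trans with (M * SQ * (h ^ 2 / rho ^ 2)).
  { apply series_Cmod_le with (1 := Hser). intros n.
    eapply Rle_trans. apply Cmod_csum.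
    apply Rle_trans with (rsum (fun k => M * (h ^ 2 / rho ^ 2) * (INR (S k) ^ 2 * q ^ k)) n).
    - apply rsum_le. intros k. rewrite Cmod_mult.
      pose proof (ek_bound y z rho k Hrho Hyr ltac:(lra)) as He.
      fold h in He.
      assert (0 <= Cmod (a k)) by apply Cmod_ge_0.
      assert (0 < rho ^ k) by (apply pow_lt; lra).
      assert (Hk : INR k ^ 2 <= INR (S k) ^ 2).
      { rewrite S_INR. pose proof (pos_INR k). nra. }
      assert (0 <= h ^ 2 / rho ^ 2) by (apply Rdiv_le_0_compat; [nra| apply pow_lt; lra]).
      assert (0 < q ^ k) by (apply pow_lt; lra).
      apply Rle_trans with (Cmod (a k) * (INR k ^ 2 * rho ^ k * (h ^ 2 / rho ^ 2))).
      { apply Rmult_le_compat_l; auto. }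
      specialize (Hb k).
      assert (0 <= INR k ^ 2) by apply pow2_ge_0.
      replace (Cmod (a k) * (INR k ^ 2 * rho ^ k * (h ^ 2 / rho ^ 2))) with
        ((Cmod (a k) * rho ^ k) * (INR k ^ 2 * (h ^ 2 / rho ^ 2))) by ring.
      replace (M * (h ^ 2 / rho ^ 2) * (INR (S k) ^ 2 * q ^ k)) with
        ((M * q ^ k) * (INR (S k) ^ 2 * (h ^ 2 / rho ^ 2))) by ring.
      apply Rmult_le_compat; auto. apply Rmult_le_pos; auto. nra. nra. 
      apply Rmult_le_compat_r; auto.
    - assert (E : forall g c n, rsum (fun k => c * g k) n = c * rsum g n).
      { intros g c m; induction m; simpl; [ring|]. rewrite IHm. ring. }
      rewrite E.
      replace (M * SQ * (h ^ 2 / rho ^ 2)) with (M * (h ^ 2 / rho ^ 2) * SQ) by ring.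
      apply Rmult_le_compat_l.
      + apply Rmult_le_pos; auto. apply Rdiv_le_0_compat; [nra| apply pow_lt; lra].
      + apply rsum_le_series; auto. }
  { assert (Hd2 : del <= eps * rho ^ 2 / (M * SQ + 1)) by apply Rmin_r.
    assert (Hr2 : 0 < rho ^ 2) by (apply pow_lt; lra).
    assert (HMS : 0 <= M * SQ) by nra.
    assert (Hh : h * (M * SQ + 1) <= eps * rho ^ 2).
    { apply Rle_trans with (del * (M * SQ + 1)).
      apply Rmult_le_compat_r; lra.
      apply Rmult_le_reg_r with (/ (M * SQ + 1)). apply Rinv_0_lt_compat; lra.
      replace (del * (M * SQ + 1) * / (M * SQ + 1)) with del by (field; lra).
      exact Hd2. }
    replace (M * SQ * (h ^ 2 / rho ^ 2)) with (h * (M * SQ * h) / rho ^ 2) by (field; lra).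
    apply Rmult_le_reg_r with (rho ^ 2); auto.
    replace (h * (M * SQ * h) / rho ^ 2 * rho ^ 2) with (h * (M * SQ * h)) by (field; lra).
    assert (0 < eps) by apply cond_pos. nra. }
Qed.

Definition om (N : nat) : C := (cos (2 * PI / INR N), sin (2 * PI / INR N)).

Lemma om_pow N m : (om N ^ m)%C = (cos (2 * PI * INR m / INR N), sin (2 * PI * INR m / INR N)).
Proof.
  induction m.
  - simpl. replace (2 * PI * 0 / INR N) with 0 by (unfold Rdiv; ring).
    rewrite cos_0, sin_0. reflexivity.
  - rewrite Cpow_S, IHm.
    replace (2 * PI * INR (S m) / INR N) with (2 * PI / INR N + 2 * PI * INR m / INR N)
      by (rewrite S_INR; unfold Rdiv; ring).
    rewrite cos_plus, sin_plus. unfold om, Cmult. simpl. f_equal; ring.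
Qed.

Lemma Cmod_cos_sin x : Cmod (cos x, sin x) = 1.
Proof.
  unfold Cmod. replace (fst (cos x, sin x) ^ 2 + snd (cos x, sin x) ^ 2) with 1. apply sqrt_1.
  pose proof (sin2_cos2 x). unfold Rsqr in H. simpl. nra.
Qed.

Lemma Cmod_om_pow N m : Cmod (om N ^ m)%C = 1.
Proof. rewrite om_pow. apply Cmod_cos_sin. Qed.

Lemma om_N N : (0 < N)%nat -> (om N ^ N)%C = 1.
Proof.
  intros HN. rewrite om_pow.
  assert (INR N <> 0) by (apply not_0_INR; lia).
  replace (2 * PI * INR N / INR N) with (2 * PI) by (field; auto).
  rewrite cos_2PI, sin_2PI. reflexivity.
Qed.

Lemma cos_ne_1 x : 0 < x < 2 * PI -> cos x <> 1.
Proof.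
  intros Hx E.
  replace x with (2 * (x / 2)) in E by field.
  rewrite cos_2a_sin in E.
  assert (0 < sin (x / 2)) by (apply sin_gt_0; lra).
  nra.
Qed.

Lemma om_pow_ne1 N s : (0 < s < N)%nat -> (om N ^ s)%C <> 1.
Proof.
  intros Hs E. rewrite om_pow in E.
  injection E as E1 E2.
  apply (cos_ne_1 (2 * PI * INR s / INR N)); auto.
  assert (0 < INR s) by (apply lt_0_INR; lia).
  assert (INR s < INR N) by (apply lt_INR; lia).
  pose proof PI_RGT_0.
  split.
  - apply Rdiv_lt_0_compat; nra.
  - apply Rlt_div_l; nra.
Qed.

Lemma csum_geom (x : C) n : ((x - 1) * csum (fun j => x ^ j) n = x ^ n - 1)%C.
Proof.
  induction n; simpl csum.
  - simpl. ring.
  - rewrite Cmult_plus_distr_l, IHn. rewrite Cpow_S. ring.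
Qed.

Lemma csum_const (c : C) n : csum (fun _ => c) n = (RtoC (INR n) * c)%C.
Proof.
  induction n; simpl csum.
  - simpl. ring.
  - rewrite IHn, S_INR, RtoC_plus. ring.
Qed.

Lemma csum_ext (f g : nat -> C) n : (forall j, (j < n)%nat -> f j = g j) -> csum f n = csum g n.
Proof.
  intros H; induction n; simpl; auto.
  rewrite IHn by (intros; apply H; lia). rewrite H by lia. reflexivity.
Qed.

Definition Gs (N m : nat) : C := csum (fun j => om N ^ (j * m))%C N.

Lemma Gs_val N q s : (0 < N)%nat -> (s < N)%nat ->
  Gs N (q * N + s) = if Nat.eqb s 0 then RtoC (INR N) else RtoC 0.
Proof.
  intros HN Hs. unfold Gs.
  assert (Hp : forall j, (om N ^ (j * (q * N + s)))%C = ((om N ^ s) ^ j)%C).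
  { intros j. rewrite Nat.mul_comm, Cpow_mult_r, Cpow_add_r, (Nat.mul_comm q N), Cpow_mult_r, om_N by auto.
    rewrite Cpow_1_l, Cmult_1_l. reflexivity. }
  rewrite (csum_ext _ (fun j => ((om N ^ s) ^ j)%C)) by (intros; apply Hp).
  destruct (Nat.eqb_spec s 0) as [->|Hne].
  - simpl Cpow at 1. rewrite (csum_ext _ (fun _ => RtoC 1)) by (intros; apply Cpow_1_l).
    rewrite csum_const. ring.
  - set (x := (om N ^ s)%C).
    assert (Hx : (x - 1)%C <> RtoC 0).
    { intros E. apply (om_pow_ne1 N s); [lia|]. fold x.
      replace x with ((x - 1) + 1)%C by ring. rewrite E. ring. }
    assert (Hg := csum_geom x N).
    assert (HxN : (x ^ N)%C = 1).
    { unfold x. rewrite <- Cpow_mult_r, Nat.mul_comm, Cpow_mult_r, om_N by auto. apply Cpow_1_l. }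
    rewrite HxN in Hg.
    replace (csum (fun j => (x ^ j)%C) N) with (/ (x - 1) * ((x - 1) * csum (fun j => (x ^ j)%C) N))%C
      by (field; auto).
    rewrite Hg. ring.
Qed.

Lemma Gs_ab N a b k : (a <= 2)%nat -> (b <= 2)%nat -> (k + 3 <= N)%nat ->
  Gs N (a + k + (N - 1) * b) = if Nat.eqb (a + k) b then RtoC (INR N) else RtoC 0.
Proof.
  intros Ha Hb Hk.
  assert (H : exists q s, (a + k + (N - 1) * b = q * N + s)%nat /\ (s < N)%nat /\ (s = 0 <-> a + k = b)%nat).
  { assert (b = 0 \/ b = 1 \/ b = 2)%nat as [ -> | [ -> | -> ] ] by lia.
    - exists 0%nat. exists (a + k)%nat. lia.
    - destruct (Nat.le_gt_cases 1 (a + k)).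
      + exists 1%nat. exists (a + k - 1)%nat. lia.
      + exists 0%nat. exists (N - 1)%nat. lia.
    - destruct (Nat.le_gt_cases 2 (a + k)).
      + exists 2%nat. exists (a + k - 2)%nat. lia.
      + exists 1%nat. exists (N + a + k - 2)%nat. lia. }
  destruct H as (q & s & E & Hs & Hiff).
  rewrite E, Gs_val by lia.
  destruct (Nat.eqb_spec s 0), (Nat.eqb_spec (a + k) b); auto; tauto.
Qed.

Lemma csum_plus (f g : nat -> C) n : csum (fun j => f j + g j)%C n = (csum f n + csum g n)%C.
Proof. induction n; simpl; [ring|]. rewrite IHn. ring. Qed.

Lemma csum_scal (c : C) (f : nat -> C) n : csum (fun j => c * f j)%C n = (c * csum f n)%C.
Proof. induction n; simpl; [ring|]. rewrite IHn. ring. Qed.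

Lemma conj_root (z : C) N : (0 < N)%nat -> Cmod z = 1 -> (z ^ N)%C = 1 -> Cconj z = (z ^ (N - 1))%C.
Proof.
  intros HN Hm Hp.
  assert (H1 : (z * Cconj z)%C = 1).
  { rewrite <- Cmod2_conj, Hm. simpl. apply injective_projections; simpl; ring. }
  assert (H2 : (z * z ^ (N - 1))%C = 1).
  { rewrite <- Cpow_S. replace (S (N - 1)) with N by lia. exact Hp. }
  assert (Hz : z <> RtoC 0).
  { intros E. rewrite E, Cmod_0 in Hm. lra. }
  replace (Cconj z) with (/ z * (z * Cconj z))%C by (field; auto).
  rewrite H1, <- H2. field. auto.
Qed.

Definition Pz (u0 u1 u2 z : C) : C := (u0 + u1 * z + u2 * z ^ 2)%C.
Definition Vw (u0 u1 u2 z : C) : C := (Pz u0 u1 u2 z * Cconj (Pz u0 u1 u2 z))%C.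
Definition Ek (N : nat) (u0 u1 u2 : C) (k : nat) : C :=
  csum (fun j => Vw u0 u1 u2 (om N ^ j) * (om N ^ j) ^ k)%C N.
Definition tt (u0 u1 u2 : C) (k : nat) : C :=
  match k with
  | 0%nat => (u0 * Cconj u0 + u1 * Cconj u1 + u2 * Cconj u2)%C
  | 1%nat => (u0 * Cconj u1 + u1 * Cconj u2)%C
  | 2%nat => (u0 * Cconj u2)%C
  | _ => RtoC 0
  end.

Lemma om_pow_split N j a k b : (0 < N)%nat ->
  (om N ^ (j * (a + k + (N - 1) * b)))%C =
  ((om N ^ j) ^ a * (om N ^ j) ^ k * (Cconj (om N ^ j)) ^ b)%C.
Proof.
  intros HN.
  rewrite (conj_root (om N ^ j) N HN).
  2: apply Cmod_om_pow.
  2: { rewrite <- Cpow_mult_r, Nat.mul_comm, Cpow_mult_r, om_N by auto. apply Cpow_1_l. }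
  rewrite <- !Cpow_mult_r, <- !Cpow_add_r. f_equal. lia.
Qed.

Lemma Ek_val N u0 u1 u2 k : (0 < N)%nat -> (k + 3 <= N)%nat ->
  Ek N u0 u1 u2 k = (RtoC (INR N) * tt u0 u1 u2 k)%C.
Proof.
  intros HN Hk. unfold Ek.
  set (g := fun a b j => (om N ^ (j * (a + k + (N - 1) * b)))%C).
  rewrite (csum_ext _ (fun j =>
     u0 * Cconj u0 * g O O j + u0 * Cconj u1 * g O 1%nat j + u0 * Cconj u2 * g O 2%nat j +
     u1 * Cconj u0 * g 1%nat O j + u1 * Cconj u1 * g 1%nat 1%nat j + u1 * Cconj u2 * g 1%nat 2%nat j +
     u2 * Cconj u0 * g 2%nat O j + u2 * Cconj u1 * g 2%nat 1%nat j + u2 * Cconj u2 * g 2%nat 2%nat j)%C).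
  2: { intros j _. unfold g. rewrite !om_pow_split by auto.
       unfold Vw, Pz. rewrite !Cplus_conj, !Cmult_conj, !Cpow_conj.
       set (c := Cconj (om N ^ j)). set (z := (om N ^ j)%C). simpl Cpow. ring. }
  rewrite !csum_plus, !csum_scal.
  unfold g. fold (Gs N (0 + k + (N - 1) * 0)) (Gs N (0 + k + (N - 1) * 1)) (Gs N (0 + k + (N - 1) * 2))
    (Gs N (1 + k + (N - 1) * 0)) (Gs N (1 + k + (N - 1) * 1)) (Gs N (1 + k + (N - 1) * 2))
    (Gs N (2 + k + (N - 1) * 0)) (Gs N (2 + k + (N - 1) * 1)) (Gs N (2 + k + (N - 1) * 2)).
  rewrite !Gs_ab by lia.
  destruct k as [|[|[|k]]]; simpl Nat.eqb; simpl tt; cbv iota; ring.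
Qed.

Lemma is_series_zero_C : is_series (fun _ : nat => RtoC 0) (RtoC 0).
Proof.
  apply lim_C_of_bound with (fun _ => 0). apply is_lim_seq_const.
  intros n. rewrite sum_n_csum, csum_const. replace (RtoC (INR (S n)) * RtoC 0 - RtoC 0)%C with (RtoC 0) by ring.
  rewrite Cmod_0. lra.
Qed.

Lemma is_series_csum (g : nat -> nat -> C) (s : nat -> C) n :
  (forall j, is_series (g j) (s j)) -> is_series (fun k => csum (fun j => g j k) n) (csum s n).
Proof.
  intros H. induction n.
  - exact is_series_zero_C.
  - simpl. exact (is_series_plus _ _ _ _ IHn (H n)).
Qed.

Lemma csum_tail (u : nat -> C) m n : (forall k, (m <= k)%nat -> u k = RtoC 0) -> (m <= n)%nat -> csum u n = csum u m.
Proof.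
  intros H Hn. induction Hn; auto. simpl. rewrite IHHn, H by lia. ring.
Qed.

Lemma is_series_finite (u : nat -> C) m : (forall k, (m <= k)%nat -> u k = RtoC 0) -> is_series u (csum u m).
Proof.
  intros H P [eps HP]. exists m. intros n Hn.
  rewrite sum_n_csum, (csum_tail u m (S n)) by (auto; lia). apply HP. apply ball_center.
Qed.

Lemma re_csum (u : nat -> C) n : Re (csum u n) = rsum (fun j => Re (u j)) n.
Proof. induction n; simpl; auto. rewrite <- IHn. reflexivity. Qed.

Lemma Vw_real u0 u1 u2 z : Vw u0 u1 u2 z = RtoC (Cmod (Pz u0 u1 u2 z) ^ 2).
Proof. unfold Vw. rewrite Cmod2_conj. reflexivity. Qed.

Lemma Cmod_Pz u0 u1 u2 z : Cmod z = 1 -> Cmod (Pz u0 u1 u2 z) <= Cmod u0 + Cmod u1 + Cmod u2.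
Proof.
  intros Hz. unfold Pz.
  eapply Rle_trans. apply Cmod_triangle.
  eapply Rle_trans. apply Rplus_le_compat_r. apply Cmod_triangle.
  rewrite !Cmod_mult, Cmod_pow, Hz. simpl. lra.
Qed.

Lemma Cmod_Vw u0 u1 u2 z : Cmod z = 1 -> Cmod (Vw u0 u1 u2 z) <= (Cmod u0 + Cmod u1 + Cmod u2) ^ 2.
Proof.
  intros Hz. rewrite Vw_real, Cmod_R, Rabs_pos_eq by apply pow2_ge_0.
  pose proof (Cmod_Pz u0 u1 u2 z Hz). pose proof (Cmod_ge_0 (Pz u0 u1 u2 z)).
  simpl. nra.
Qed.

Lemma Cmod_tt u0 u1 u2 k : Cmod (tt u0 u1 u2 k) <= (Cmod u0 + Cmod u1 + Cmod u2) ^ 2.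
Proof.
  pose proof (Cmod_ge_0 u0). pose proof (Cmod_ge_0 u1). pose proof (Cmod_ge_0 u2).
  destruct k as [|[|[|k]]]; simpl tt.
  - eapply Rle_trans. apply Cmod_triangle. eapply Rle_trans. apply Rplus_le_compat_r. apply Cmod_triangle.
    rewrite !Cmod_mult, !Cmod_conj. nra.
  - eapply Rle_trans. apply Cmod_triangle. rewrite !Cmod_mult, !Cmod_conj. nra.
  - rewrite !Cmod_mult, !Cmod_conj. nra.
  - rewrite Cmod_0. nra.
Qed.

Lemma Cmod_Ek N u0 u1 u2 k : Cmod (Ek N u0 u1 u2 k) <= INR N * (Cmod u0 + Cmod u1 + Cmod u2) ^ 2.
Proof.
  unfold Ek. eapply Rle_trans. apply Cmod_csum.
  set (K := (Cmod u0 + Cmod u1 + Cmod u2) ^ 2).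
  apply Rle_trans with (rsum (fun _ => K) N).
  - apply rsum_le. intros j. rewrite Cmod_mult, Cmod_pow, Cmod_om_pow, pow1, Rmult_1_r.
    apply Cmod_Vw, Cmod_om_pow.
  - clear. induction N; simpl rsum. simpl; lra. rewrite S_INR. lra.
Qed.

Lemma tail_bound (D : nat -> C) (be : nat -> R) (Sb c : R) m n :
  (forall k, 0 <= be k) -> is_series be Sb -> 0 <= c ->
  (forall k, (k < m)%nat -> D k = RtoC 0) -> (forall k, Cmod (D k) <= c * be k) ->
  rsum (fun k => Cmod (D k)) n <= c * (Sb - rsum be m).
Proof.
  intros Hbe Hs Hc HD0 HD.
  assert (Hz : forall n, (n <= m)%nat -> rsum (fun k => Cmod (D k)) n = 0).
  { induction n0; intros Hn; simpl; auto. rewrite IHn0 by lia. rewrite HD0 by lia. rewrite Cmod_0. ring. }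
  assert (Hk : forall k, rsum (fun k => Cmod (D k)) (k + m) <= c * (rsum be (k + m) - rsum be m)).
  { induction k; simpl.
    - rewrite Hz by lia. lra.
    - specialize (HD (k + m)%nat). specialize (Hbe (k + m)%nat). nra. }
  assert (Hle : rsum be m <= Sb) by (apply rsum_le_series; auto).
  destruct (Nat.le_gt_cases n m) as [Hn|Hn].
  - rewrite Hz by auto. nra.
  - replace n with ((n - m) + m)%nat by lia.
    eapply Rle_trans. apply Hk.
    apply Rmult_le_compat_l; auto.
    pose proof (rsum_le_series be Sb (n - m + m) Hbe Hs). lra.
Qed.


Lemma abs_bound_series (b : nat -> C) (p : C -> C) (r : R) :
  0 <= r < 1 -> (forall w, Cmod w < 1 -> is_series (fun k => (b k * w ^ k)%C) (p w)) ->
  ex_series (fun k => Cmod (b k) * r ^ k).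
Proof.
  intros Hr Hp.
  set (R1 := (1 + r) / 2).
  destruct (series_terms_bounded _ _ (Hp (RtoC R1) ltac:(rewrite Cmod_R, Rabs_pos_eq; unfold R1; lra))) as [M HM].
  set (q := r / R1).
  assert (Hq : 0 <= q < 1).
  { unfold q, R1. split. apply Rdiv_le_0_compat; lra. apply Rlt_div_l; lra. }
  apply (ex_series_le (K := R_AbsRing) (V := R_CompleteNormedModule)) with (fun k => M * (INR (S k) ^ 2 * q ^ k)).
  - intros k. change norm with Rabs.
    rewrite Rabs_pos_eq by (apply Rmult_le_pos; [apply Cmod_ge_0|apply pow_le; lra]).
    specialize (HM k). rewrite Cmod_mult, Cmod_pow, Cmod_R, Rabs_pos_eq in HM by (unfold R1; lra).
    assert (HR1 : 0 < R1) by (unfold R1; lra).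
    replace r with (q * R1) by (unfold q; field; lra).
    rewrite Rpow_mult_distr.
    assert (0 <= q ^ k) by (apply pow_le; lra).
    assert (0 < R1 ^ k) by (apply pow_lt; lra).
    assert (1 <= INR (S k) ^ 2).
    { assert (1 <= INR (S k)) by (apply (le_INR 1); lia). nra. }
    assert (0 <= M) by (eapply Rle_trans; [|apply HM]; apply Rmult_le_pos; [apply Cmod_ge_0|lra]).
    replace (Cmod (b k) * (q ^ k * R1 ^ k)) with (q ^ k * (Cmod (b k) * R1 ^ k)) by ring.
    apply Rle_trans with (q ^ k * M). apply Rmult_le_compat_l; auto.
    replace (M * (INR (S k) ^ 2 * q ^ k)) with ((q ^ k * M) * INR (S k) ^ 2) by ring.
    rewrite <- (Rmult_1_r (q ^ k * M)) at 1. apply Rmult_le_compat_l; auto. nra.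
  - exists (M * Series (fun k => INR (S k) ^ 2 * q ^ k)).
    apply is_series_ext with (fun k => scal M (INR (S k) ^ 2 * q ^ k)). intros; reflexivity.
    apply (is_series_scal_l (K := R_AbsRing) (V := R_NormedModule)).
    apply Series_correct, ex_series_poly; auto.
Qed.

Lemma re_minus (a c : C) : Re (a - c)%C = Re a - Re c.
Proof. destruct a, c. unfold Cminus, Cplus, Copp, Re. simpl. ring. Qed.

Definition Qr (b : nat -> C) (u0 u1 u2 : C) (r : R) : C :=
  (tt u0 u1 u2 0 * b 0%nat + tt u0 u1 u2 1 * b 1%nat * RtoC r + tt u0 u1 u2 2 * b 2%nat * RtoC (r ^ 2))%C.

Lemma avg_ineq_eps (b : nat -> C) (p : C -> C) (u0 u1 u2 : C) (r : R) :
  0 <= r < 1 -> (forall w, Cmod w < 1 -> is_series (fun k => (b k * w ^ k)%C) (p w)) ->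
  (forall w, Cmod w < 1 -> 0 < Re (p w)) ->
  forall eps, 0 < eps -> - eps <= Re (Qr b u0 u1 u2 r).
Proof.
  intros Hr Hp Hpos eps Heps.
  set (be := fun k => Cmod (b k) * r ^ k).
  assert (Hbe : forall k, 0 <= be k) by (intros; unfold be; apply Rmult_le_pos; [apply Cmod_ge_0|apply pow_le; lra]).
  destruct (abs_bound_series b p r Hr Hp) as [Sb HSb].
  set (K := (Cmod u0 + Cmod u1 + Cmod u2) ^ 2).
  assert (HK : 0 <= K) by (unfold K; apply pow2_ge_0).
  set (e1 := eps / (2 * K + 1)).
  assert (He1 : 0 < e1) by (unfold e1; apply Rdiv_lt_0_compat; lra).
  destruct (real_series_tail be Sb HSb e1 He1) as [m Hm].
  set (N := (m + 5)%nat).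
  assert (HN : (0 < N)%nat) by (unfold N; lia).
  assert (HNr : 0 < INR N) by (apply lt_0_INR; auto).
  set (SN := csum (fun j => Vw u0 u1 u2 (om N ^ j) * p (RtoC r * om N ^ j))%C N).
  assert (Hw : forall j, Cmod (RtoC r * om N ^ j)%C < 1).
  { intros j. rewrite Cmod_mult, Cmod_om_pow, Cmod_R, Rabs_pos_eq by lra. lra. }
  assert (HS : is_series (fun k => (b k * RtoC (r ^ k) * Ek N u0 u1 u2 k)%C) SN).
  { unfold SN.
    assert (H := is_series_csum (fun j k => (Vw u0 u1 u2 (om N ^ j) * (b k * (RtoC r * om N ^ j) ^ k))%C)
                   (fun j => (Vw u0 u1 u2 (om N ^ j) * p (RtoC r * om N ^ j))%C) N).
    eapply is_series_ext; [|apply H].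
    - intros k. unfold Ek. rewrite <- csum_scal. apply csum_ext. intros j _.
      rewrite Cpow_mult_l, RtoC_pow. ring.
    - intros j. exact (is_series_scal (K := C_AbsRing) (V := C_NormedModule) (Vw u0 u1 u2 (om N ^ j)) _ _ (Hp _ (Hw j))). }
  assert (HM : is_series (fun k => (b k * RtoC (r ^ k) * (RtoC (INR N) * tt u0 u1 u2 k)))%C
                 (RtoC (INR N) * Qr b u0 u1 u2 r)%C).
  { assert (EQ : csum (fun k => (b k * RtoC (r ^ k) * (RtoC (INR N) * tt u0 u1 u2 k)))%C 3 =
                 (RtoC (INR N) * Qr b u0 u1 u2 r)%C).
    { unfold Qr. simpl csum. simpl tt. simpl pow. rewrite ?RtoC_mult. ring. }
    rewrite <- EQ.
    apply is_series_finite. intros k Hk. destruct k as [|[|[|k]]]; try lia. simpl tt. ring. }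
  set (D := fun k => (b k * RtoC (r ^ k) * (Ek N u0 u1 u2 k - RtoC (INR N) * tt u0 u1 u2 k))%C).
  assert (HD : is_series D (SN - RtoC (INR N) * Qr b u0 u1 u2 r)%C).
  { eapply is_series_ext; [|exact (is_series_minus _ _ _ _ HS HM)].
    intros k. unfold D. change (@eq C ((b k * RtoC (r ^ k) * Ek N u0 u1 u2 k) - (b k * RtoC (r ^ k) * (RtoC (INR N) * tt u0 u1 u2 k)))%C
      (b k * RtoC (r ^ k) * (Ek N u0 u1 u2 k - RtoC (INR N) * tt u0 u1 u2 k))%C). ring. }
  assert (HDb : Cmod (SN - RtoC (INR N) * Qr b u0 u1 u2 r)%C <= (2 * INR N * K) * (Sb - rsum be (N - 2))).
  { apply series_Cmod_le with (1 := HD). intros n.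
    eapply Rle_trans. apply Cmod_csum.
    apply tail_bound; auto.
    - apply Rmult_le_pos; lra.
    - intros k Hk. unfold D. rewrite Ek_val by lia. ring.
    - intros k. unfold D, be. rewrite !Cmod_mult, Cmod_R, Rabs_pos_eq by (apply pow_le; lra).
      assert (E : Cmod (Ek N u0 u1 u2 k - RtoC (INR N) * tt u0 u1 u2 k)%C <= 2 * INR N * K).
      { unfold Cminus. eapply Rle_trans. apply Cmod_triangle. rewrite Cmod_opp, Cmod_mult, Cmod_R, Rabs_pos_eq by lra.
        pose proof (Cmod_Ek N u0 u1 u2 k). pose proof (Cmod_tt u0 u1 u2 k). fold K in H, H0. nra. }
      assert (0 <= Cmod (b k) * r ^ k) by apply Hbe.
      pose proof (Cmod_ge_0 (Ek N u0 u1 u2 k - RtoC (INR N) * tt u0 u1 u2 k)%C).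
      nra. }
  assert (Htail : Sb - rsum be (N - 2) <= e1).
  { specialize (Hm (N - 2)%nat ltac:(unfold N; lia)).
    pose proof (Rle_abs (Sb - rsum be (N - 2))). lra. }
  assert (HSNpos : 0 <= Re SN).
  { unfold SN. rewrite re_csum. apply rsum_nonneg. intros j.
    rewrite Vw_real, re_scal_l. apply Rmult_le_pos. apply pow2_ge_0. apply Rlt_le, Hpos, Hw. }
  assert (Hre : Re (RtoC (INR N) * Qr b u0 u1 u2 r)%C >= Re SN - Cmod (SN - RtoC (INR N) * Qr b u0 u1 u2 r)%C).
  { pose proof (re_le_Cmod (SN - RtoC (INR N) * Qr b u0 u1 u2 r)%C).
    assert (Re (SN - RtoC (INR N) * Qr b u0 u1 u2 r)%C = Re SN - Re (RtoC (INR N) * Qr b u0 u1 u2 r)%C) by apply re_minus.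
    pose proof (Rle_abs (Re (SN - RtoC (INR N) * Qr b u0 u1 u2 r)%C)). lra. }
  rewrite re_scal_l in Hre.
  assert (HKe : 2 * K * e1 <= eps).
  { unfold e1. apply Rle_trans with ((2 * K + 1) * (eps / (2 * K + 1))).
    apply Rmult_le_compat_r; [apply Rlt_le; exact He1 | lra]. right. field. lra. }
  assert (INR N * Re (Qr b u0 u1 u2 r) >= - (2 * INR N * K * e1)).
  { assert (2 * INR N * K * (Sb - rsum be (N - 2)) <= 2 * INR N * K * e1).
    { apply Rmult_le_compat_l; [nra|]. auto. }
    lra. }
  assert (Re (Qr b u0 u1 u2 r) >= - (2 * K * e1)).
  { apply Rle_ge. apply Rmult_le_reg_l with (INR N); [lra|]. lra. }
  lra.
Qed.

Lemma quad_limit (A B Cc : R) :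
  (forall r, 0 <= r < 1 -> 0 <= A + B * r + Cc * r ^ 2) -> 0 <= A + B + Cc.
Proof.
  intros H.
  destruct (Rle_lt_dec 0 (A + B + Cc)) as [|Hs]; auto. exfalso.
  set (s := A + B + Cc) in *.
  set (L := Rabs B + 3 * Rabs Cc + 1).
  assert (HL : 1 <= L) by (unfold L; pose proof (Rabs_pos B); pose proof (Rabs_pos Cc); lra).
  set (d := Rmin (1/2) (- s / (2 * L))).
  assert (Hd0 : 0 < d).
  { unfold d. apply Rmin_pos. lra. apply Rdiv_lt_0_compat; lra. }
  assert (Hd1 : d <= 1/2) by apply Rmin_l.
  assert (Hd2 : d * (2 * L) <= - s).
  { assert (d <= - s / (2 * L)) by apply Rmin_r.
    apply Rle_trans with (- s / (2 * L) * (2 * L)). apply Rmult_le_compat_r; lra. right. field. lra. }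
  specialize (H (1 - d) ltac:(lra)).
  replace (A + B * (1 - d) + Cc * (1 - d) ^ 2) with (s - d * (B + 2 * Cc) + Cc * d * d) in H
    by (unfold s; ring).
  pose proof (Rle_abs (- B)). pose proof (Rle_abs (- Cc)). rewrite Rabs_Ropp in H0, H1.
  pose proof (Rle_abs Cc).
  assert (- (B + 2 * Cc) <= Rabs B + 2 * Rabs Cc) by lra.
  assert (Cc * d * d <= Rabs Cc * d).
  { pose proof (Rabs_pos Cc).
    apply Rle_trans with (Rabs Cc * d * d). apply Rmult_le_compat_r; [lra|]. apply Rmult_le_compat_r; lra.
    rewrite Rmult_assoc. apply Rmult_le_compat_l; [lra|]. nra. }
  assert (d * (- (B + 2 * Cc)) <= d * (Rabs B + 2 * Rabs Cc)) by (apply Rmult_le_compat_l; lra).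
  assert (d * (Rabs B + 3 * Rabs Cc) <= d * L) by (apply Rmult_le_compat_l; unfold L; lra).
  nra.
Qed.

Lemma avg_ineq (b : nat -> C) (p : C -> C) (u0 u1 u2 : C) :
  (forall w, Cmod w < 1 -> is_series (fun k => (b k * w ^ k)%C) (p w)) ->
  (forall w, Cmod w < 1 -> 0 < Re (p w)) ->
  0 <= Re (Qr b u0 u1 u2 1).
Proof.
  intros Hp Hpos.
  assert (Hr : forall r, 0 <= r < 1 -> 0 <= Re (Qr b u0 u1 u2 r)).
  { intros r Hr. apply Rnot_lt_le. intros Hlt.
    pose proof (avg_ineq_eps b p u0 u1 u2 r Hr Hp Hpos (- Re (Qr b u0 u1 u2 r) / 2) ltac:(lra)). lra. }
  assert (E : forall r, Re (Qr b u0 u1 u2 r) =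
     Re (tt u0 u1 u2 0 * b 0%nat) + Re (tt u0 u1 u2 1 * b 1%nat) * r + Re (tt u0 u1 u2 2 * b 2%nat) * r ^ 2).
  { intros r. unfold Qr. simpl Re. rewrite <- !re_scal_r. simpl. ring. }
  rewrite E. replace (1 ^ 2) with 1 by ring. rewrite !Rmult_1_r.
  apply quad_limit. intros r Hr1. rewrite <- E. auto.
Qed.

Lemma Qr_choice (b : nat -> C) (w : C) :
  b 0%nat = RtoC 1 -> Cmod w = 1 ->
  Re (Qr b w (- (w * b 1%nat + Cconj (b 1%nat)) / 2)%C (RtoC 1) 1) =
  2 - Cmod (b 1%nat) ^ 2 / 2 + Re (w * (b 2%nat - b 1%nat * b 1%nat / 2))%C.
Proof.
  intros Hb0 Hw.
  rewrite Cmod2_alt.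
  assert (Hw2 : Re w ^ 2 + Im w ^ 2 = 1) by (rewrite <- Cmod2_alt, Hw; ring).
  unfold Qr, tt. rewrite Hb0.
  destruct w as [x y]. destruct (b 1%nat) as [p q]. destruct (b 2%nat) as [s t].
  simpl in Hw2 |- *.
  unfold Cconj, Cmult, Cplus, Cdiv, Copp, Cminus, Cinv, Cplus. simpl.
  field_simplify; try lra.
  replace (y ^ 2) with (1 - x ^ 2) by lra. field.
Qed.

Lemma unit_choice (W : C) (c : R) :
  (forall w, Cmod w = 1 -> 0 <= c + Re (w * W)%C) -> Cmod W <= c.
Proof.
  intros H.
  destruct (Ceq_dec W (RtoC 0)) as [E|E].
  - subst. specialize (H (RtoC 1) ltac:(apply Cmod_1)).
    rewrite Cmod_0. rewrite Cmult_0_r in H. simpl in H. lra.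
  - assert (HW : 0 < Cmod W) by (apply Cmod_gt_0; auto).
    assert (HWn : RtoC (Cmod W) <> RtoC 0) by (intros Hc; injection Hc; lra).
    specialize (H (- Cconj W / RtoC (Cmod W))%C).
    assert (E1 : Cmod (- Cconj W / RtoC (Cmod W))%C = 1).
    { rewrite Cmod_div by auto. rewrite Cmod_opp, Cmod_conj, Cmod_R, Rabs_pos_eq by lra. field. lra. }
    specialize (H E1).
    assert (E2 : (- Cconj W / RtoC (Cmod W) * W)%C = RtoC (- Cmod W)).
    { replace (- Cconj W / RtoC (Cmod W) * W)%C with (- (W * Cconj W) / RtoC (Cmod W))%C by (field; auto).
      rewrite <- Cmod2_conj. rewrite RtoC_pow. rewrite RtoC_opp. field. auto. }
    rewrite E2 in H. simpl in H. lra.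
Qed.

Lemma Cmod_rev_tri (u v : C) : Cmod v - Cmod u <= Cmod (u + v)%C.
Proof.
  pose proof (Cmod_triangle (u + v) (- u))%C. rewrite Cmod_opp in H.
  replace (u + v + - u)%C with v in H by ring. lra.
Qed.

Lemma final_real (X Y G1 G2 : R) : 0 <= X -> 0 <= Y -> Y <= 2 - X ^ 2 / 2 ->
  G1 = X / 4 -> 0 <= G2 -> G2 <= Y / 6 + 5 * X ^ 2 / 48 -> 5 * X ^ 2 / 48 - Y / 6 <= G2 ->
  -(1/3) <= G2 - G1 <= 1/3.
Proof.
  intros HX HY HXY HG1 HG2 Hu Hl. subst G1. split.
  - destruct (Rle_lt_dec X (4/3)); nra.
  - nra.
Qed.

Lemma part1 (f : C -> C) (a : nat -> C) : bounded_turning f a ->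
  -(1/3) <= Cmod (Gamma2 a) - Cmod (Gamma1 a) <= 1/3.
Proof.
  intros (Ha0 & Ha1 & Hser & Hder).
  assert (Hf : forall w, Cmod w < 1 -> is_series (fun k => (a k * w ^ k)%C) (f w)).
  { intros w Hw. apply is_pseries_C. apply Hser. exact Hw. }
  set (b := fun k => (RtoC (INR (S k)) * a (S k))%C).
  set (p := C_derive f).
  assert (Hp : forall w, Cmod w < 1 -> is_series (fun k => (b k * w ^ k)%C) (p w)).
  { intros w Hw. destruct (pseries_derive a f 1 w Hf Hw) as [d [Hd1 Hd2]].
    unfold p. rewrite (is_C_derive_unique _ _ _ Hd2). exact Hd1. }
  assert (Hpos : forall w, Cmod w < 1 -> 0 < Re (p w)).
  { intros w Hw. destruct (Hder w Hw) as [l [Hl Hre]]. unfold p. rewrite (is_C_derive_unique _ _ _ Hl). exact Hre. }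
  assert (Hb0 : b 0%nat = RtoC 1) by (unfold b; rewrite Ha1; simpl; ring).
  set (W := (b 2%nat - b 1%nat * b 1%nat / 2)%C).
  assert (HW : Cmod W <= 2 - Cmod (b 1%nat) ^ 2 / 2).
  { apply unit_choice. intros w Hw.
    rewrite <- Qr_choice by auto. apply avg_ineq with p; auto. }
  assert (Hb1 : b 1%nat = (RtoC 2 * a 2%nat)%C) by (unfold b; replace (INR 2) with 2 by (simpl; ring); reflexivity).
  assert (Hb2 : b 2%nat = (RtoC 3 * a 3%nat)%C) by (unfold b; replace (INR 3) with 3 by (simpl; ring); reflexivity).
  assert (Hn2 : RtoC 2 <> RtoC 0) by (intros H; injection H; lra).
  assert (Hn3 : RtoC 3 <> RtoC 0) by (intros H; injection H; lra).
  assert (E1 : Gamma1 a = (- (b 1%nat) / RtoC 4)%C).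
  { unfold Gamma1. rewrite Hb1. field. }
  assert (E2 : Gamma2 a = (- W / RtoC 6 + RtoC (5 / 48) * (b 1%nat * b 1%nat))%C).
  { unfold Gamma2, W. rewrite Hb1, Hb2. rewrite RtoC_div by lra. field. }
  assert (Hc4 : RtoC 4 <> RtoC 0) by (intros H; injection H; lra).
  assert (Hc6 : RtoC 6 <> RtoC 0) by (intros H; injection H; lra).
  assert (CW : Cmod (- W / RtoC 6)%C = Cmod W / 6).
  { rewrite Cmod_div, Cmod_opp, Cmod_R, Rabs_pos_eq by (auto; lra). reflexivity. }
  assert (CB : Cmod (RtoC (5 / 48) * (b 1%nat * b 1%nat))%C = 5 * Cmod (b 1%nat) ^ 2 / 48).
  { rewrite !Cmod_mult, Cmod_R, Rabs_pos_eq by lra. simpl. field. }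
  apply (final_real (Cmod (b 1%nat)) (Cmod W)); auto.
  - apply Cmod_ge_0.
  - apply Cmod_ge_0.
  - rewrite E1, Cmod_div, Cmod_opp, Cmod_R, Rabs_pos_eq by (auto; lra). reflexivity.
  - apply Cmod_ge_0.
  - rewrite E2. eapply Rle_trans. apply Cmod_triangle. rewrite CW, CB. lra.
  - rewrite E2. eapply Rle_trans; [|apply Cmod_rev_tri]. rewrite CW, CB. lra.
Qed.

Definition gco (k : nat) : C := match k with O => RtoC 1 | S _ => RtoC 2 end.

Lemma G_partial (w : C) n :
  ((1 - w) * csum (fun k => gco k * w ^ k)%C (S n) = 1 + w - 2 * w ^ (S n))%C.
Proof.
  induction n.
  - simpl. ring.
  - change (csum (fun k => gco k * w ^ k)%C (S (S n))) with (csum (fun k => gco k * w ^ k)%C (S n) + gco (S n) * w ^ (S n))%C.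
    rewrite Cmult_plus_distr_l, IHn. simpl gco. rewrite (Cpow_S w (S n)). ring.
Qed.

Lemma G_series (w : C) : Cmod w < 1 ->
  is_series (fun k => (gco k * w ^ k)%C) ((1 + w) / (1 - w))%C.
Proof.
  intros Hw.
  assert (Hnz : (1 - w)%C <> RtoC 0).
  { intros E. assert (w = RtoC 1) by (replace w with (1 - (1 - w))%C by ring; rewrite E; ring).
    subst. rewrite Cmod_1 in Hw. lra. }
  assert (Hm : 0 < Cmod (1 - w)%C) by (apply Cmod_gt_0; auto).
  apply lim_C_of_bound with (fun n => 2 / Cmod (1 - w)%C * Cmod w ^ (S n)).
  - assert (H := is_lim_seq_geom (Cmod w) ltac:(rewrite Rabs_pos_eq by apply Cmod_ge_0; auto)).
    apply is_lim_seq_incr_1 in H.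
    apply (is_lim_seq_scal_l _ (2 / Cmod (1 - w)%C)) in H. simpl in H.
    rewrite Rmult_0_r in H. exact H.
  - intros n. rewrite sum_n_csum.
    replace (csum (fun k => gco k * w ^ k)%C (S n) - (1 + w) / (1 - w))%C with
      (/ (1 - w) * ((1 - w) * csum (fun k => gco k * w ^ k)%C (S n)) - (1 + w) / (1 - w))%C by (field; auto).
    rewrite G_partial.
    replace (/ (1 - w) * (1 + w - 2 * w ^ S n) - (1 + w) / (1 - w))%C with (- (RtoC 2) * w ^ S n / (1 - w))%C by (field; auto).
    rewrite Cmod_div by auto. rewrite Cmod_mult, Cmod_opp, Cmod_pow, Cmod_R, Rabs_pos_eq by lra.
    right. field. lra.
Qed.

Lemma re_G_pos (w : C) : Cmod w < 1 -> 0 < Re ((1 + w) / (1 - w))%C.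
Proof.
  intros Hw.
  assert (Hw2 : Re w ^ 2 + Im w ^ 2 < 1).
  { rewrite <- Cmod2_alt. pose proof (Cmod_ge_0 w). nra. }
  destruct w as [x y]. simpl in Hw2.
  assert (Hd : 0 < (1 - x) ^ 2 + y ^ 2).
  { assert (x < 1) by nra. nra. }
  assert (E : Re ((1 + (x, y)) / (1 - (x, y)))%C = (1 - x ^ 2 - y ^ 2) / ((1 - x) ^ 2 + y ^ 2)).
  { unfold Cdiv, Cinv, Cmult, Cplus, Cminus, Copp, Re. simpl. field. nra. }
  rewrite E.
  apply Rdiv_lt_0_compat; lra.
Qed.

Definition cco (lam : R) (k : nat) : C := (RtoC lam * gco k + RtoC (1 - lam) * gco k * (-1) ^ k)%C.
Definition aco (lam : R) (k : nat) : C :=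
  match k with O => RtoC 0 | S m => (cco lam m / RtoC (INR (S m)))%C end.
Definition PS (a : nat -> C) (z : C) : C :=
  epsilon (inhabits (RtoC 0)) (fun l => is_series (fun k => (a k * z ^ k)%C) l).

Lemma RtoC_neq0 (x : R) : x <> 0 -> RtoC x <> RtoC 0.
Proof. intros H E. apply (f_equal Re) in E. rewrite !re_RtoC in E. auto. Qed.

Lemma Cmod_gco k : Cmod (gco k) <= 2.
Proof. destruct k; simpl gco; rewrite Cmod_R, Rabs_pos_eq; lra. Qed.

Lemma Cmod_cco lam k : 0 <= lam <= 1 -> Cmod (cco lam k) <= 2.
Proof.
  intros Hl. unfold cco. eapply Rle_trans. apply Cmod_triangle.
  assert (Hm1 : Cmod (-1)%C = 1).
  { first [apply Cmod_m1 | rewrite Cmod_R; rewrite Rabs_Ropp, Rabs_R1; reflexivity | rewrite Cmod_R; unfold Rabs; destruct Rcase_abs; lra]. }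
  rewrite !Cmod_mult, Cmod_pow, Hm1, pow1, !Cmod_R, !Rabs_pos_eq by lra.
  pose proof (Cmod_gco k). pose proof (Cmod_ge_0 (gco k)). nra.
Qed.

Lemma Cmod_aco lam k : 0 <= lam <= 1 -> Cmod (aco lam k) <= 2.
Proof.
  intros Hl. destruct k; unfold aco; cbv iota beta.
  - rewrite Cmod_0. lra.
  - assert (H1 : 1 <= INR (S k)) by (apply (le_INR 1); lia).
    rewrite Cmod_div by (apply RtoC_neq0; apply Rgt_not_eq; lra).
    rewrite Cmod_R, Rabs_pos_eq by lra.
    pose proof (Cmod_cco lam k Hl). pose proof (Cmod_ge_0 (cco lam k)).
    apply Rle_trans with (Cmod (cco lam k)); auto.
    apply Rmult_le_reg_r with (INR (S k)); [lra|].
    replace (Cmod (cco lam k) / INR (S k) * INR (S k)) with (Cmod (cco lam k)) by (field; lra). nra.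
Qed.

Lemma PS_series lam z : 0 <= lam <= 1 -> Cmod z < 1 ->
  is_series (fun k => (aco lam k * z ^ k)%C) (PS (aco lam) z).
Proof.
  intros Hl Hz. unfold PS. apply epsilon_spec.
  assert (Hex : ex_series (fun k => (aco lam k * z ^ k)%C)).
  { apply (ex_series_le (K := C_AbsRing) (V := C_CompleteNormedModule)) with (fun k => 2 * Cmod z ^ k).
    - intros k. change norm with Cmod. rewrite Cmod_mult, Cmod_pow.
      apply Rmult_le_compat_r. apply pow_le, Cmod_ge_0. apply Cmod_aco; auto.
    - exists (2 * / (1 - Cmod z)).
      apply is_series_ext with (fun k => scal 2 (Cmod z ^ k)). intros; reflexivity.
      apply (is_series_scal_l (K := R_AbsRing) (V := R_NormedModule)).
      apply is_series_geom. rewrite Rabs_pos_eq by apply Cmod_ge_0. auto. }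
  destruct Hex as [l Hl']. exists l. exact Hl'.
Qed.

Lemma cco_series lam z : Cmod z < 1 ->
  is_series (fun k => (cco lam k * z ^ k)%C)
    (RtoC lam * ((1 + z) / (1 - z)) + RtoC (1 - lam) * ((1 + - z) / (1 - - z)))%C.
Proof.
  intros Hz.
  assert (H1 := G_series z Hz).
  assert (H2 := G_series (- z)%C ltac:(rewrite Cmod_opp; auto)).
  assert (H := is_series_plus _ _ _ _ (is_series_scal (K := C_AbsRing) (V := C_NormedModule) (RtoC lam) _ _ H1)
                 (is_series_scal (K := C_AbsRing) (V := C_NormedModule) (RtoC (1 - lam)) _ _ H2)).
  eapply is_series_ext; [|exact H].
  intros k. unfold cco.
  change (@eq C (RtoC lam * (gco k * z ^ k) + RtoC (1 - lam) * (gco k * (- z) ^ k))%C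
    ((RtoC lam * gco k + RtoC (1 - lam) * gco k * (-1) ^ k) * z ^ k)%C).
  replace (- z)%C with ((-1) * z)%C by ring. rewrite Cpow_mult_l. ring.
Qed.

Lemma ext_bt lam : 0 <= lam <= 1 -> bounded_turning (PS (aco lam)) (aco lam).
Proof.
  intros Hl. unfold bounded_turning. split; [reflexivity|]. split.
  { unfold aco, cco, gco. simpl. rewrite RtoC_minus. field. }
  split.
  { intros z Hz. apply is_pseries_C. apply PS_series; auto. }
  intros z Hz.
  destruct (pseries_derive (aco lam) (PS (aco lam)) 1 z (fun w Hw => PS_series lam w Hl Hw) Hz) as [d [Hd1 Hd2]].
  exists d. split; auto.
  assert (Hd3 : is_series (fun k => (cco lam k * z ^ k)%C) d).
  { eapply is_series_ext; [|exact Hd1]. intros k. unfold aco; cbv iota beta.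
    assert (INR (S k) <> 0) by (apply not_0_INR; lia).
    change (@eq C (RtoC (INR (S k)) * (cco lam k / RtoC (INR (S k))) * z ^ k)%C (cco lam k * z ^ k)%C).
    field. apply RtoC_neq0; auto. }
  rewrite (lim_C_unique _ _ _ Hd3 (cco_series lam z Hz)).
  assert (HA := re_G_pos z Hz).
  assert (HB := re_G_pos (- z)%C ltac:(rewrite Cmod_opp; auto)).
  assert (RP : forall u v : C, Re (u + v)%C = Re u + Re v) by (intros [] []; reflexivity).
  rewrite RP, !re_scal_l. nra.
Qed.

Lemma G1_half : Gamma1 (aco (1/2)) = RtoC 0.
Proof.
  unfold Gamma1, aco, cco, gco. simpl.
  apply injective_projections; simpl; field.
Qed.

Lemma G2_half : Gamma2 (aco (1/2)) = RtoC (-1/3).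
Proof.
  unfold Gamma2, aco, cco, gco. simpl.
  apply injective_projections; simpl; field.
Qed.

Lemma G1_56 : Gamma1 (aco (5/6)) = RtoC (-1/3).
Proof.
  unfold Gamma1, aco, cco, gco. simpl.
  apply injective_projections; simpl; field.
Qed.

Lemma G2_56 : Gamma2 (aco (5/6)) = RtoC 0.
Proof.
  unfold Gamma2, aco, cco, gco. simpl.
  apply injective_projections; simpl; field.
Qed.

Theorem mainTheorem10 :
  (forall (f : C -> C) (a : nat -> C), bounded_turning f a ->
     -(1/3) <= Cmod (Gamma2 a) - Cmod (Gamma1 a) <= 1/3) /\
  (exists (f : C -> C) (a : nat -> C), bounded_turning f a /\
     Cmod (Gamma2 a) - Cmod (Gamma1 a) = 1/3) /\
  (exists (f : C -> C) (a : nat -> C), bounded_turning f a /\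
     Cmod (Gamma2 a) - Cmod (Gamma1 a) = -(1/3)).
Proof.
  split; [exact part1|]. split.
  - exists (PS (aco (1/2))), (aco (1/2)). split. apply ext_bt; lra.
    rewrite G1_half, G2_half, !Cmod_R, Rabs_R0. rewrite Rabs_left by lra. lra.
  - exists (PS (aco (5/6))), (aco (5/6)). split. apply ext_bt; lra.
    rewrite G1_56, G2_56, !Cmod_R, Rabs_R0. rewrite Rabs_left by lra. lra.
Qed.
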